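(* Let $D$ be a binary normal delta-matroid. Then there is a full lc-sequence for $D$ if and only if every summand of $D$ that is even, connected, and has nonempty ground set is of the form $(\{v\},\{\emptyset\})$ for some element $v$ of the ground set of $D$.
   Context: A set system is a pair $D=(V,S)$ with $V$ a finite set (the ground set) and $S$ a set of subsets of $V$. For set systems $D_1=(V_1,S_1)$, $D_2=(V_2,S_2)$ with disjoint ground sets, the direct sum is $D_1\oplus D_2=(V_1\cup V_2,\{X_1\cup X_2: X_1\in S_1, X_2\in S_2\})$; $D_1$ is a summand of $D$ if $D=D_1\oplus D_2$ for some $D_2$. $D$ is connected if it is not the direct sum of two set systems with nonempty ground sets. $D$ is even if all sets in $S$ have cardinalities of the same parity. Graphs are finite, may have loops, but no multiple edges; the adjacency matrix $A(H)$ is over $GF(2)$ with diagonal entry $1$ exactly at looped vertices, and $H[X]$ is the induced subgraph on $X$. $\mathcal{D}_H=(V(H),S)$ with $X\in S$ iff $A(H[X])$ is invertible over $GF(2)$ (the empty matrix counts as invertible). A binary normal delta-matroid is a set system of the form $\mathcal{D}_H$ for some graph $H$. A sequence $(v_1,\dots,v_k)$ of mutually distinct elements of $V$ is an lc-sequence for $D=(V,S)$ if $\{v_1,\dots,v_i\}\in S$ for all $i\in\{0,\dots,k\}$; it is full if moreover $\{v_1,\dots,v_k\}$ is an inclusion-maximal element of $S$. *)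

(* Defs.v *)
From HB Require Import structures.
From mathcomp Require Import all_boot all_order all_algebra.
Set Implicit Arguments. Unset Strict Implicit. Unset Printing Implicit Defensive.
Import GRing.Theory.
Local Open Scope ring_scope.

Record setsys (T : finType) := SetSys { gset : {set T}; sets : {set {set T}} }.

Section SetSystems.
Variable T : finType.

Definition wf_setsys (D : setsys T) : Prop :=
  forall X, X \in sets D -> X \subset gset D.

(* direct sum (intended for disjoint ground sets) *)
Definition dsum (D1 D2 : setsys T) : setsys T :=
  SetSys (gset D1 :|: gset D2)
         [set X1 :|: X2 | X1 in sets D1, X2 in sets D2].

Definition is_summand (D1 D : setsys T) : Prop :=
  exists D2 : setsys T,
    [/\ wf_setsys D1, wf_setsys D2, [disjoint gset D1 & gset D2]
      & D = dsum D1 D2].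

Definition connected (D : setsys T) : Prop :=
  ~ exists D1 D2 : setsys T,
      [/\ wf_setsys D1, wf_setsys D2, [disjoint gset D1 & gset D2]
        & [/\ gset D1 != set0, gset D2 != set0 & D = dsum D1 D2]].

Definition even_setsys (D : setsys T) : Prop :=
  exists b : bool, forall X, X \in sets D -> odd #|X| = b.

Definition adjmx (A : T -> T -> bool) (X : {set T}) : 'M['F_2]_#|X| :=
  \matrix_(i, j) ((A (enum_val i) (enum_val j) : nat)%:R : 'F_2).

Definition DH (A : T -> T -> bool) (V : {set T}) : setsys T :=
  SetSys V [set X in powerset V | adjmx A X \in unitmx].

(* binary normal delta-matroid: D = D_H for some graph H on V(D);
   graphs: symmetric adjacency relation, loops allowed (A x x) *)
Definition binary_normal (D : setsys T) : Prop :=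
  exists A : T -> T -> bool, (forall x y, A x y = A y x) /\ D = DH A (gset D).

Definition lc_seq (D : setsys T) (s : seq T) : Prop :=
  [/\ uniq s, {subset s <= gset D} &
      forall i, (i <= size s)%N -> [set x in take i s] \in sets D].

Definition full_lc_seq (D : setsys T) (s : seq T) : Prop :=
  lc_seq D s /\
  forall Y, Y \in sets D -> [set x in s] \subset Y -> Y = [set x in s].

End SetSystems.

(* Main.v *)
Require Import Defs.
From mathcomp Require Import all_boot all_order all_algebra.
From Stdlib Require Import Classical.
Set Implicit Arguments. Unset Strict Implicit. Unset Printing Implicit Defensive.
Import GRing.Theory.
Local Open Scope ring_scope.

Notation F2 := 'F_2.
Definition toF (b : bool) : F2 := (b : nat)%:R.

Lemma F2cases (a : F2) : a = 0 \/ a = 1.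
Proof.
have := valP a; case E: (val a) => [|[|//]] _; [left|right]; apply/val_inj; rewrite E //.
Qed.
Lemma F2_11 : (1 + 1 : F2) = 0. Proof. by apply/val_inj. Qed.
Lemma F2_addxx (a : F2) : a + a = 0.
Proof. by case: (F2cases a) => ->; rewrite ?addr0 ?F2_11. Qed.
Lemma F2_10 : (1 : F2) != 0. Proof. by []. Qed.
Lemma toFD a b : toF (a (+) b) = toF a + toF b.
Proof. by case: a; case: b; rewrite /toF /= ?addr0 ?add0r ?F2_11. Qed.
Lemma toFM a b : toF (a && b) = toF a * toF b.
Proof. by case: a; case: b; rewrite /toF /= ?mulr0 ?mul0r ?mulr1. Qed.
Lemma toF1 : toF true = 1. Proof. by []. Qed.
Lemma toF0 : toF false = 0. Proof. by []. Qed.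
Lemma F2_eqsub (a b : F2) : (a + b = 0) -> a = b.
Proof. by move=> H; rewrite -[b]add0r -H -addrA F2_addxx addr0. Qed.

Section Main.
Variable T : finType.
Implicit Types (A : T -> T -> bool) (X Y V W Z : {set T}).

Definition kerP (M : T -> T -> F2) X :=
  forall f : T -> F2, (forall y, y \in X -> \sum_(x in X) f x * M x y = 0) ->
    forall x, x \in X -> f x = 0.

Definition adjmxF (M : T -> T -> F2) X : 'M[F2]_#|X| :=
  \matrix_(i, j) M (enum_val i) (enum_val j).

Lemma unitP M X : adjmxF M X \in unitmx <-> kerP M X.
Proof.
split.
- move=> U f Hf x Hx.
  pose u : 'rV[F2]_#|X| := \row_i f (enum_val i).
  have H0 : u *m adjmxF M X = 0.
    apply/rowP => j; rewrite !mxE.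
    rewrite -[RHS](Hf (enum_val j) (enum_valP j)) (@big_enum_val _ _ _ _ (mem X)).
    by apply: eq_bigr => i _; rewrite !mxE.
  have Hu : u = 0.
    by rewrite -[u]mulmx1 -(mulmxV U) mulmxA H0 mul0mx.
  have := congr1 (fun w : 'rV_#|X| => w 0 (enum_rank_in Hx x)) Hu.
  by rewrite !mxE enum_rankK_in.
- move=> K; rewrite -row_free_unit; apply: inj_row_free => u Hu.
  pose f x := \sum_(i < #|X| | enum_val i == x) u 0 i.
  have Hf i : f (enum_val i) = u 0 i.
    rewrite /f (big_pred1 i) // => k /=.
    by apply/eqP/eqP => [/enum_val_inj|->].
  have Kf : forall y, y \in X -> \sum_(x in X) f x * M x y = 0.
    move=> y Hy.
    have := congr1 (fun w : 'rV_#|X| => w 0 (enum_rank_in Hy y)) Hu.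
    rewrite !mxE (@big_enum_val _ _ _ _ (mem X)) => H; rewrite -[RHS]H.
    by apply: eq_bigr => i _; rewrite Hf !mxE enum_rankK_in.
  apply/rowP => i; rewrite mxE -Hf; exact: K Kf _ (enum_valP i).
Qed.
Definition MF A : T -> T -> F2 := fun x y => toF (A x y).
Definition piv A v : T -> T -> bool := fun x y => A x y (+) (A x v && A v y).

Lemma MFpiv A v x y : MF (piv A v) x y = MF A x y + MF A x v * MF A v y.
Proof. by rewrite /MF /piv toFD toFM. Qed.

Lemma sum_piv A v Y (g : T -> F2) t :
  \sum_(z in Y) g z * MF (piv A v) z t =
  \sum_(z in Y) g z * MF A z t + (\sum_(z in Y) g z * MF A z v) * MF A v t.
Proof.
rewrite big_distrl -big_split /=; apply: eq_bigr => z _.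
by rewrite MFpiv mulrDr mulrA.
Qed.

Lemma pivot_fw A v Y : A v v -> v \notin Y ->
  kerP (MF A) (v |: Y) -> kerP (MF (piv A v)) Y.
Proof.
move=> Avv vY K g Hg x Hx.
pose S := \sum_(z in Y) g z * MF A z v.
pose f z := if z == v then S else g z.
have fY : forall z, z \in Y -> f z = g z.
  by move=> z zY; rewrite /f; case: eqP => // E; rewrite -E zY in vY.
have sY t : \sum_(z in Y) f z * MF A z t = \sum_(z in Y) g z * MF A z t.
  by apply: eq_bigr => z zY; rewrite fY.
rewrite -fY //; apply: K; last by rewrite setU1r.
move=> t; rewrite in_setU1 big_setU1 //= sY /f eqxx => /orP [/eqP ->|tY].
  by rewrite /MF Avv toF1 mulr1 F2_addxx.
by have := Hg t tY; rewrite sum_piv addrC.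
Qed.

Lemma pivot_bw A v Y : A v v -> v \notin Y ->
  kerP (MF (piv A v)) Y -> kerP (MF A) (v |: Y).
Proof.
move=> Avv vY K f Hf.
have Hv := Hf v (setU11 v Y).
rewrite big_setU1 //= {1}/MF Avv toF1 mulr1 in Hv.
have fv := F2_eqsub Hv.
have fY : forall x, x \in Y -> f x = 0.
  apply: K => t tY; rewrite sum_piv -fv.
  by have := Hf t (setU1r v tY); rewrite big_setU1 //= addrC.
move=> x; rewrite in_setU1 => /orP [/eqP ->|]; last exact: fY.
by rewrite fv big1 // => z zY; rewrite fY ?mul0r.
Qed.


Definition symm A := forall x y, A x y = A y x.

Lemma ind_ker A Y x : x \in Y -> (forall t, t \in Y -> ~~ A x t) -> ~ kerP (MF A) Y.
Proof.
move=> xY Hx K.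
pose f z : F2 := toF (z == x).
have : f x = 0.
  apply: K => // t tY; rewrite (big_setD1 x) //= big1 ?addr0.
    by rewrite /f eqxx /MF (negbTE (Hx t tY)) mulr0.
  by move=> z; rewrite !inE => /andP [/negbTE zx _]; rewrite /f zx mul0r.
by rewrite /f eqxx.
Qed.

Lemma zero_ker A Y : (forall x y, x \in Y -> y \in Y -> ~~ A x y) ->
  kerP (MF A) Y -> Y = set0.
Proof.
move=> H K; apply/setP => x; rewrite inE; apply/negP => xY.
by apply: (ind_ker xY (H x^~ xY)).
Qed.

Lemma single_ker A v : kerP (MF A) [set v] -> A v v.
Proof.
move=> K; apply/negPn/negP => Hv; apply: (@ind_ker A [set v] v) => //.
  by rewrite set11.
by move=> t; rewrite inE => /eqP ->.
Qed.

Lemma split_ker (M : T -> T -> F2) X Y : Y \subset X ->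
  (forall a b, a \in Y -> b \in X -> b \notin Y -> M a b = 0 /\ M b a = 0) ->
  kerP M X <-> kerP M Y /\ kerP M (X :\: Y).
Proof.
move=> sYX Hc.
have sumX (f : T -> F2) t : \sum_(z in X) f z * M z t =
   \sum_(z in Y) f z * M z t + \sum_(z in X :\: Y) f z * M z t.
  rewrite (bigID (mem Y)) /=; congr (_ + _); apply: eq_bigl => z.
    by rewrite andb_idl // => zY; rewrite (subsetP sYX).
  by rewrite !inE andbC.
have zY (f : T -> F2) t : t \in X :\: Y -> \sum_(z in Y) f z * M z t = 0.
  move=> /setDP [tX tY]; rewrite big1 // => z zy.
  by have [-> _] := Hc z t zy tX tY; rewrite mulr0.
have zD (f : T -> F2) t : t \in Y -> \sum_(z in X :\: Y) f z * M z t = 0.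
  move=> tY; rewrite big1 // => z /setDP [zX zy].
  by have [_ ->] := Hc t z tY zX zy; rewrite mulr0.
split.
- move=> K; split.
  + move=> g Hg x xY.
    pose f z := if z \in Y then g z else 0.
    have : f x = 0.
      apply: K; last by rewrite (subsetP sYX).
      move=> t tX; rewrite sumX.
      have -> : \sum_(z in X :\: Y) f z * M z t = 0.
        by rewrite big1 // => z /setDP [_ /negbTE zn]; rewrite /f zn mul0r.
      rewrite addr0 (eq_bigr (fun z => g z * M z t)); last first.
        by move=> z zy; rewrite /f zy.
      case tY: (t \in Y); first exact: Hg.
      by apply: zY; rewrite inE tY tX.
    by rewrite /f xY.
  + move=> g Hg x xD.
    pose f z := if z \in Y then 0 else g z.
    have : f x = 0.
      apply: K; last by move: xD => /setDP [].
      move=> t tX; rewrite sumX.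
      have -> : \sum_(z in Y) f z * M z t = 0.
        by rewrite big1 // => z zy; rewrite /f zy mul0r.
      rewrite add0r (eq_bigr (fun z => g z * M z t)); last first.
        by move=> z /setDP [_ /negbTE zn]; rewrite /f zn.
      case tY: (t \in Y); first exact: zD.
      by apply: Hg; rewrite inE tY tX.
    by move: xD => /setDP [_ /negbTE xn]; rewrite /f xn.
- move=> [K1 K2] f Hf x xX.
  case xY: (x \in Y).
    apply: (K1 f _ x xY) => t tY.
    by have := Hf t (subsetP sYX t tY); rewrite sumX (zD f t tY) addr0.
  apply: (K2 f _ x); last by rewrite inE xY xX.
  move=> t tD; have /setDP [tX _] := tD.
  by have := Hf t tX; rewrite sumX (zY f t tD) add0r.
Qed.

Definition piv2 A x y : T -> T -> bool :=
  fun z w => A z w (+) (A z x && A y w) (+) (A z y && A x w).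

Lemma pivot2_fw A X x y : x \in X -> y \in X -> x != y ->
  ~~ A x x -> ~~ A y y -> A x y -> A y x ->
  kerP (MF A) X -> kerP (MF (piv2 A x y)) (X :\ x :\ y).
Proof.
move=> xX yX xy Axx Ayy Axy Ayx K g Hg z zX'.
set X' := X :\ x :\ y in zX' Hg *.
have yX' : y \notin X' by rewrite /X' !inE eqxx.
have yx : y != x by rewrite eq_sym.
have xX' : x \notin y |: X'.
  by rewrite /X' !inE eqxx /= andbF orbF.
have EX : X = x |: (y |: X').
  by rewrite /X' setD1K ?inE ?setD1K // eq_sym xy.
pose Sy := \sum_(w in X') g w * MF A w y.
pose Sx := \sum_(w in X') g w * MF A w x.
pose f w := if w == x then Sy else if w == y then Sx else g w.
have fX' w : w \in X' -> f w = g w.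
  rewrite /f !inE => /andP [/negbTE -> /andP [/negbTE -> _]] //.
have sumf t : \sum_(w in X) f w * MF A w t =
    Sy * MF A x t + Sx * MF A y t + \sum_(w in X') g w * MF A w t.
  rewrite EX big_setU1 // big_setU1 //= addrA; congr (_ * _ + _ * _ + _).
  - by rewrite /f eqxx.
  - by rewrite /f (negbTE (yx : y != x)) eqxx.
  - by apply: eq_bigr => w wX; rewrite fX'.
have MFxx : MF A x x = 0 by rewrite /MF (negbTE Axx).
have MFyy : MF A y y = 0 by rewrite /MF (negbTE Ayy).
have MFxy : MF A x y = 1 by rewrite /MF Axy.
have MFyx : MF A y x = 1 by rewrite /MF Ayx.
rewrite -fX' //; apply: K; last by move: zX'; rewrite !inE => /and3P [].
move=> t; rewrite EX !in_setU1 => /orP [/eqP ->|/orP [/eqP ->| tX']].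
- by rewrite -EX sumf MFxx MFyx mulr0 add0r mulr1 F2_addxx.
- by rewrite -EX sumf MFyy MFxy mulr0 addr0 mulr1 F2_addxx.
- have E : \sum_(w in X') g w * MF (piv2 A x y) w t =
     \sum_(w in X') g w * MF A w t + Sx * MF A y t + Sy * MF A x t.
    rewrite /Sx /Sy !big_distrl -!big_split /=; apply: eq_bigr => w _.
    by rewrite /MF /piv2 !toFD !toFM !mulrDr !mulrA.
  have H := Hg t tX'; rewrite E in H.
  rewrite -EX sumf -[RHS]H.
  set C := \sum_(w in X') g w * MF A w t.
  by rewrite [LHS]addrC [Sy * _ + _]addrC addrA.
Qed.


Lemma piv2_symm A x y : symm A -> symm (piv2 A x y).
Proof.
move=> Hs z w; rewrite /piv2 (Hs w z) (Hs w x) (Hs y z) (Hs w y) (Hs x z).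
by case: (A z w); case: (A x w); case: (A z y); case: (A y w); case: (A z x).
Qed.

Lemma piv2_loop A x y z : symm A -> piv2 A x y z z = A z z.
Proof.
move=> Hs; rewrite /piv2 (Hs y z) (Hs x z).
by case: (A z z); case: (A z x); case: (A z y).
Qed.

Lemma alt_even_n n : forall A X, (#|X| <= n)%N -> symm A ->
  (forall z, z \in X -> ~~ A z z) -> kerP (MF A) X -> ~~ odd #|X|.
Proof.
elim: n => [|n IH] A X leX Hs Hl K.
  by move: leX; rewrite leqn0 => /eqP ->.
case: (set_0Vmem X) => [-> | [x xX]]; first by rewrite cards0.
case: (boolP [exists y in X, A x y]) => [/existsP [y /andP [yX Axy]] | Hn]; last first.
  exfalso; apply: (ind_ker xX _ K) => t tX; apply/negP => Axt.
  by move/existsP: Hn; apply; exists t; rewrite tX Axt.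
have xy : x != y by apply/eqP => E; move: (Hl x xX); rewrite {2}E Axy.
have K' := pivot2_fw xX yX xy (Hl x xX) (Hl y yX) Axy (etrans (Hs y x) Axy) K.
have cX : #|X| = (#|X :\ x :\ y|).+2.
  rewrite (cardsD1 x X) xX (cardsD1 y (X :\ x)) !inE eq_sym xy yX /=.
  by rewrite add1n.
have := IH (piv2 A x y) (X :\ x :\ y).
rewrite cX /= negbK => H; apply: H => //.
- by move: leX; rewrite cX ltnS => /ltnW.
- exact: piv2_symm.
- move=> z zX; rewrite piv2_loop //; apply: Hl.
  by move: zX; rewrite !inE => /and3P [].
Qed.

Lemma pair_ker A x y : x != y -> ~~ A x x -> ~~ A y y -> A x y -> A y x ->
  kerP (MF A) [set x; y].
Proof.
move=> xy Axx Ayy Axy Ayx f Hf.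
have nx : x \notin [set y] by rewrite inE.
have sm t : \sum_(z in [set x; y]) f z * MF A z t = f x * MF A x t + f y * MF A y t.
  by rewrite big_setU1 //= big_set1.
have := Hf x (setU11 _ _); rewrite sm /MF (negbTE Axx) Ayx mulr0 add0r mulr1 => fy.
have := Hf y (setU1r _ (set11 _)); rewrite sm /MF (negbTE Ayy) Axy mulr0 addr0 mulr1 => fx.
by move=> z; rewrite !inE => /orP [] /eqP ->.
Qed.


Definition cll A W Z := [&& Z \subset W, [forall z in Z, ~~ A z z] &
   [forall z in Z, forall r in W :\: Z, ~~ A z r]].
Definition bads A W := [set x | [exists Z : {set T},
   [&& cll A W Z, x \in Z & [exists y in Z, A x y]]]].

Lemma cllP A W Z : reflect [/\ Z \subset W, forall z, z \in Z -> ~~ A z z &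
   forall z r, z \in Z -> r \in W -> r \notin Z -> ~~ A z r] (cll A W Z).
Proof.
apply: (iffP and3P) => [[H1 /forall_inP H2 /forall_inP H3]|[H1 H2 H3]]; split => //.
- move=> z r zZ rW rZ; have /forall_inP := H3 z zZ; apply; by rewrite inE rZ rW.
- by apply/forall_inP.
- apply/forall_inP => z zZ; apply/forall_inP => r; rewrite inE => /andP [rZ rW].
  exact: H3.
Qed.

Lemma badsP A W x : reflect (exists Z, [/\ cll A W Z, x \in Z & exists2 y, y \in Z & A x y])
  (x \in bads A W).
Proof.
rewrite inE; apply: (iffP existsP) => [[Z /and3P [H1 H2 /existsP [y /andP [H3 H4]]]]|[Z [H1 H2 [y H3 H4]]]].
  by exists Z; split => //; exists y.
by exists Z; rewrite H1 H2 /=; apply/existsP; exists y; rewrite H3.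
Qed.

Lemma piv_symm A v : symm A -> symm (piv A v).
Proof. by move=> Hs x y; rewrite /piv (Hs x y) (Hs x v) (Hs v y) andbC. Qed.

Lemma bads_loop A W u : u \in bads A W -> ~~ A u u.
Proof. by case/badsP => Z [/cllP [_ H _] uZ _]; apply: H. Qed.

Lemma bads_sub A W u : u \in bads A W -> u \in W.
Proof. by case/badsP => Z [/cllP [H _ _] uZ _]; apply: (subsetP H). Qed.

Lemma step1 A W v x : symm A -> v \in W -> A v v -> bads A W = set0 ->
  x \in bads (piv A v) (W :\ v) ->
  exists u, u \in bads (piv A v) (W :\ v) /\ A u v.
Proof.
move=> Hs vW Avv B0 /badsP [M [/cllP [MW Ml Mc] xM [y yM Sxy]]].
set S' := piv A v in Ml Mc Sxy *.
case: (boolP [exists u in bads S' (W :\ v), A u v]).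
  by move=> /exists_inP [u H1 H2]; exists u.
move=> /exists_inP Hn.
have Hb : forall z, z \in bads S' (W :\ v) -> A z v = false.
  by move=> z zb; apply/negP => H; apply: Hn; exists z.
pose M1 := [set z in M | [exists y in M, S' z y]].
have M1b : forall z, z \in M1 -> z \in bads S' (W :\ v).
  move=> z; rewrite inE => /andP [zM /exists_inP [y' y'M Hy']].
  apply/badsP; exists M; split => //; first by apply/cllP.
  by exists y'.
have M1M : forall z, z \in M1 -> z \in M by move=> z; rewrite inE => /andP [].
have HS' : forall a b, A a v = false -> S' a b = A a b.
  by move=> a b H; rewrite /S' /piv H andFb addbF.
have : x \in bads A W; last by rewrite B0 inE.
apply/badsP; exists M1; split.
- apply/cllP; split.
  + apply/subsetP => z zM1; have zM := M1M z zM1.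
    by have := subsetP MW z zM; rewrite inE => /andP [].
  + move=> z zM1; rewrite -(HS' z z (Hb z (M1b z zM1))); exact: Ml (M1M z zM1).
  + move=> z r zM1 rW rM1.
    have Azv := Hb z (M1b z zM1).
    case: (eqVneq r v) => [->|rv]; first by rewrite Azv.
    have rW' : r \in W :\ v by apply/setD1P.
    case rM: (r \in M).
      have : ~~ [exists y in M, S' r y] by move: rM1; rewrite inE rM.
      move=> /exists_inP H; rewrite Hs; apply/negP => Arz; apply: H; exists z => //.
        exact: M1M.
      by rewrite /S' /piv (Hs v z) Azv andbF Arz.
    by rewrite -(HS' z r Azv); apply: Mc => //; [exact: M1M | rewrite rM].
- by rewrite inE xM; apply/exists_inP; exists y.
- exists y.
    rewrite inE yM; apply/exists_inP; exists x => //.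
    by rewrite /S' (piv_symm _ Hs).
  have Axv : A x v = false.
    by apply: Hb; apply: M1b; rewrite inE xM; apply/exists_inP; exists y.
  by rewrite -(HS' x y Axv).
Qed.


Lemma claimC A W u v : symm A -> v \in W -> A v v -> A u v ->
  u \in bads (piv A v) (W :\ v) ->
  bads (piv A u) (W :\ u) \subset (bads (piv A v) (W :\ v)) :\ u.
Proof.
move=> Hs vW Avv Auv ub.
have Avu : A v u by rewrite Hs.
have uWv := bads_sub ub.
have uv : u != v by move: uWv => /setD1P [].
have uW : u \in W by move: uWv => /setD1P [].
have vWu : v \in W :\ u by apply/setD1P; split; rewrite // eq_sym.
move: (ub) => /badsP [M [/cllP [MW Ml Mc] uM [y0 y0M Suy0]]].
have Auu : A u u.
  by move: (Ml u uM); rewrite /piv Auv Avu /=; case: (A u u).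
apply/subsetP => x /badsP [Z [/cllP [ZW Zl Zc] xZ [y yZ Sxy]]].
have vZ : v \notin Z.
  apply/negP => vZ.
  have y0W : y0 \in W :\ v := subsetP MW y0 y0M.
  have y0u : y0 != u.
    by apply/eqP => E; move: (Ml u uM); rewrite -{2}E Suy0.
  have y0Wu : y0 \in W :\ u.
    by apply/setD1P; split => //; move: y0W => /setD1P [].
  have Sv : piv A u v y0.
    by move: Suy0; rewrite /piv Auv Avu /=; case: (A u y0); case: (A v y0).
  have y0Z : y0 \in Z.
    by apply/negPn/negP => H; move: (Zc v y0 vZ y0Wu H); rewrite Sv.
  move: (Zl y0 y0Z) (Ml y0 y0M) Suy0.
  rewrite /piv Auv (Hs y0 u) (Hs y0 v) /=.
  by case: (A y0 y0); case: (A u y0); case: (A v y0).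
have Zfacts : forall q, q \in Z -> A q u = A q v /\ A q q = A q u.
  move=> q qZ.
  have qv : v \notin Z := vZ.
  have H1 := Zc q v qZ vWu vZ.
  have H2 := Zl q qZ.
  move: H1 H2; rewrite /piv Auv (Hs u q) /=.
  by case: (A q v); case: (A q u); case: (A q q).
rewrite in_setD1; apply/andP; split.
  by apply/eqP => E; move: (subsetP ZW x xZ); rewrite E in_setD1 eqxx.
apply/badsP; exists (Z :|: M); split.
- apply/cllP; split.
  + apply/subsetP => z; rewrite in_setU => /orP [zZ|zM]; last exact: subsetP MW z zM.
    apply/setD1P; split.
      by apply/eqP => E; rewrite -E zZ in vZ.
    by move: (subsetP ZW z zZ) => /setD1P [].
  + move=> z; rewrite in_setU => /orP [zZ|zM]; last exact: Ml.
    have [E1 E2] := Zfacts z zZ.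
    by rewrite /piv -E1 E2 (Hs v z) -E1 andbb addbb.
  + move=> q r; rewrite in_setU => qZM rW; rewrite in_setU negb_or => /andP [rZ rM].
    case/orP: qZM => [qZ|qM]; last exact: Mc.
    have ru : r != u by apply/eqP => E; rewrite E uM in rM.
    have rWu : r \in W :\ u by apply/setD1P; split => //; move: rW => /setD1P [].
    have H1 := Zc q r qZ rWu rZ.
    have H2 := Mc u r uM rW rM.
    have [E1 _] := Zfacts q qZ.
    move: H1 H2; rewrite /piv Auv /= -E1.
    by case: (A u r); case: (A v r); case: (A q r); case: (A q u).
- by rewrite in_setU xZ.
- exists y; first by rewrite in_setU yZ.
  have [E1 _] := Zfacts x xZ.
  have [E2 _] := Zfacts y yZ.
  by move: Sxy; rewrite /piv -E1 (Hs v y) -E2 (Hs y u).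
Qed.


Lemma good_pivot A W : symm A -> bads A W = set0 -> forall v, v \in W -> A v v ->
  exists v, [/\ v \in W, A v v & bads (piv A v) (W :\ v) = set0].
Proof.
move=> Hs B0.
suff H : forall n v, v \in W -> A v v -> (#|bads (piv A v) (W :\ v)| <= n)%N ->
  exists v, [/\ v \in W, A v v & bads (piv A v) (W :\ v) = set0].
  by move=> v vW Avv; apply: (H _ v vW Avv (leqnn _)).
elim=> [|n IH] v vW Avv Hc.
  by exists v; split => //; apply: cards0_eq; move: Hc; rewrite leqn0 => /eqP.
case: (set_0Vmem (bads (piv A v) (W :\ v))) => [E|[x xb]]; first by exists v.
have [u [ub Auv]] := step1 Hs vW Avv B0 xb.
have uW : u \in W by move: (bads_sub ub) => /setD1P [].
have Avu : A v u by rewrite Hs.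
have Auu : A u u.
  by move: (bads_loop ub); rewrite /piv Auv Avu /=; case: (A u u).
apply: (IH u uW Auu).
have := claimC Hs vW Avv Auv ub => /subset_leq_card Hs2.
rewrite -ltnS; apply: leq_trans Hc; apply: leq_ltn_trans Hs2 _.
by rewrite (cardsD1 u (bads (piv A v) (W :\ v))) ub.
Qed.

Lemma inDH A W X : X \in sets (DH A W) <-> X \subset W /\ kerP (MF A) X.
Proof.
rewrite /DH /= inE powersetE.
split; first by move=> /andP [H1 H2]; split => //; apply/(unitP (MF A) X).
by move=> [H1 H2]; rewrite H1 /=; apply/(unitP (MF A) X).
Qed.

Lemma ker0 M : kerP M set0.
Proof. by move=> f _ x; rewrite inE. Qed.

Lemma set0_DH A W : set0 \in sets (DH A W).
Proof. by apply/inDH; split; [exact: sub0set | exact: ker0]. Qed.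

Lemma full_nil A W : (forall x y, x \in W -> y \in W -> ~~ A x y) ->
  full_lc_seq (DH A W) [::].
Proof.
move=> H; split.
  split => // i _; rewrite (_ : take i [::] = [::]); last by case: i.
  rewrite set_nil; exact: set0_DH.
move=> Y /inDH [YW K] _; rewrite set_nil; apply: zero_ker K.
by move=> x y xY yY; apply: H; apply: (subsetP YW).
Qed.

Lemma full_cons A W v s : v \in W -> A v v ->
  full_lc_seq (DH (piv A v) (W :\ v)) s -> full_lc_seq (DH A W) (v :: s).
Proof.
move=> vW Avv [[us ss Hp] Hm].
have vs : v \notin s by apply/negP => /ss /=; rewrite in_setD1 eqxx.
have sW : {subset s <= W} by move=> x /ss /=; rewrite in_setD1 => /andP [].
split; first split.
- by rewrite /= vs us.
- by move=> x; rewrite inE => /orP [/eqP ->|/sW].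
- case=> [|i] Hi; first by rewrite take0 set_nil; exact: set0_DH.
  rewrite /= set_cons.
  have /inDH [YW K] := Hp i Hi.
  have vY : v \notin [set x in take i s].
    by apply/negP => /(subsetP YW); rewrite in_setD1 eqxx.
  apply/inDH; split; last exact: pivot_bw.
  apply/subsetP => x; rewrite in_setU1 => /orP [/eqP -> //|/(subsetP YW)].
  by rewrite in_setD1 => /andP [].
- move=> Y /inDH [YW K] sY.
  have vY : v \in Y by apply: (subsetP sY); rewrite set_cons setU11.
  have EY : Y = v |: (Y :\ v) by rewrite setD1K.
  have vY' : v \notin Y :\ v by rewrite in_setD1 eqxx.
  have K' : kerP (MF (piv A v)) (Y :\ v) by apply: pivot_fw => //; rewrite -EY.
  have Y'W : Y :\ v \subset W :\ v by apply: setSD.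
  have sY' : [set x in s] \subset Y :\ v.
    apply/subsetP => x xs; rewrite in_setD1; apply/andP; split.
      by apply/eqP => E; move: xs; rewrite E inE (negbTE vs).
    by apply: (subsetP sY); rewrite set_cons in_setU1 xs orbT.
  have := Hm (Y :\ v) (proj2 (inDH _ _ _) (conj Y'W K')) sY' => E.
  by rewrite EY E set_cons.
Qed.

Theorem thmP n : forall A W, (#|W| <= n)%N -> symm A -> bads A W = set0 ->
  exists s, full_lc_seq (DH A W) s.
Proof.
elim: n => [|n IH] A W leW Hs B0.
  exists [::]; apply: full_nil => x y xW.
  by move: leW; rewrite leqn0 => /eqP /cards0_eq E; rewrite E inE in xW.
case: (boolP [exists v in W, A v v]) => [/exists_inP [v0 v0W Av0]|Hn].
  have [v [vW Avv B1]] := good_pivot Hs B0 v0W Av0.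
  have leW' : (#|W :\ v| <= n)%N by move: leW; rewrite (cardsD1 v W) vW.
  have [s Hfs] := IH (piv A v) (W :\ v) leW' (piv_symm v Hs) B1.
  by exists (v :: s); apply: full_cons.
exists [::]; apply: full_nil => x y xW yW; apply/negP => Axy.
have : x \in bads A W; last by rewrite B0 inE.
apply/badsP; exists W; split => //; last by exists y.
apply/cllP; split => //.
  by move=> z zW; apply/negP => H; move/exists_inP: Hn; apply; exists z.
by move=> z r _ -> .
Qed.


Lemma disjP' (B C : {set T}) : [disjoint B & C] <-> (forall x, x \in B -> x \notin C).
Proof.
split; first by move=> H x xB; rewrite (disjointFr H xB).
move=> H; rewrite -setI_eq0; apply/eqP/setP => x; rewrite !inE.
by case: (boolP (x \in B)) => //= xB; rewrite (negbTE (H x xB)).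
Qed.

Lemma in_dsum (D1 D2 : setsys T) X :
  X \in sets (dsum D1 D2) <-> exists X1 X2, [/\ X1 \in sets D1, X2 \in sets D2 & X = X1 :|: X2].
Proof.
split; first by move=> /imset2P [X1 X2 H1 H2 ->]; exists X1, X2.
by move=> [X1 [X2 [H1 H2 ->]]]; apply/imset2P; exists X1 X2.
Qed.

Lemma set0_dsum (D1 D2 : setsys T) : set0 \in sets (dsum D1 D2) ->
  set0 \in sets D1 /\ set0 \in sets D2.
Proof.
move=> /in_dsum [X1 [X2 [H1 H2 E]]].
have /eqP := esym E; rewrite setU_eq0 => /andP [/eqP E1 /eqP E2].
by rewrite E1 in H1; rewrite E2 in H2.
Qed.

Lemma wf_dsum (D1 D2 : setsys T) : wf_setsys D1 -> wf_setsys D2 -> wf_setsys (dsum D1 D2).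
Proof.
move=> W1 W2 X /in_dsum [X1 [X2 [H1 H2 ->]]] /=.
by apply: setUSS; [exact: W1 | exact: W2].
Qed.

Lemma dsumC (D1 D2 : setsys T) : dsum D1 D2 = dsum D2 D1.
Proof.
rewrite /dsum setUC; congr SetSys; apply/setP => X.
by apply/imset2P/imset2P => [[X1 X2 H1 H2 ->]|[X1 X2 H1 H2 ->]]; exists X2 X1;
  rewrite // setUC.
Qed.

Lemma dsumA (D1 D2 D3 : setsys T) : dsum (dsum D1 D2) D3 = dsum D1 (dsum D2 D3).
Proof.
rewrite /dsum /= setUA; congr SetSys; apply/setP => X.
apply/imset2P/imset2P.
  move=> [Y X3 /imset2P [X1 X2 H1 H2 ->] H3 ->].
  exists X1 (X2 :|: X3) => //; last by rewrite setUA.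
  by apply/imset2P; exists X2 X3.
move=> [X1 Y H1 /imset2P [X2 X3 H2 H3 ->] ->].
exists (X1 :|: X2) X3 => //; last by rewrite setUA.
by apply/imset2P; exists X1 X2.
Qed.

Lemma summand_piece (D D1 E1 E2 : setsys T) :
  set0 \in sets D -> is_summand D1 D ->
  [/\ wf_setsys E1, wf_setsys E2, [disjoint gset E1 & gset E2]
    & [/\ gset E1 != set0, gset E2 != set0 & D1 = dsum E1 E2]] ->
  [/\ is_summand E1 D, (even_setsys D1 -> even_setsys E1) &
      (#|gset E1| < #|gset D1|)%N].
Proof.
move=> D0 [D2 [W1 W2 Dj ED]] [V1 V2 Dj' [ne1 ne2 ED1]].
have [D10 _] : set0 \in sets D1 /\ set0 \in sets D2 by apply: set0_dsum; rewrite -ED.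
have [_ E20] : set0 \in sets E1 /\ set0 \in sets E2 by apply: set0_dsum; rewrite -ED1.
split.
- exists (dsum E2 D2); split => //.
  + exact: wf_dsum.
  + apply/disjP' => x xE1; rewrite in_setU negb_or; apply/andP; split.
      by move/disjP': Dj'; apply.
    by move/disjP': Dj; apply; rewrite ED1 /= in_setU xE1.
  + by rewrite ED ED1 dsumA.
- move=> [b Hb]; exists b => X XE1; apply: Hb.
  by rewrite ED1; apply/in_dsum; exists X, set0; rewrite setU0.
- have [w wE2] := set0Pn _ ne2.
  have wE1 : w \notin gset E1.
    by apply/negP => H; move/disjP': Dj' => /(_ w H); rewrite wE2.
  have : gset E1 \subset gset D1 :\ w.
    apply/subsetP => x xE1; rewrite ED1 /= in_setD1 in_setU xE1 andbT.
    by apply/eqP => E; rewrite -E xE1 in wE1.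
  move/subset_leq_card; rewrite (cardsD1 w (gset D1)) ED1 /= in_setU wE2 orbT.
  by rewrite add1n.
Qed.

Lemma reduce (D : setsys T) : set0 \in sets D -> forall n (D1 : setsys T),
  (#|gset D1| <= n)%N -> is_summand D1 D -> even_setsys D1 ->
  (exists2 X, X \in sets D1 & X != set0) ->
  exists D1', [/\ is_summand D1' D, even_setsys D1', connected D1' &
     exists2 X, X \in sets D1' & X != set0].
Proof.
move=> D0; elim=> [|n IH] D1 le HS Hev [X XD1 Xne].
  case: HS => D2 [W1 _ _ _].
  have := W1 X XD1; move: le; rewrite leqn0 => /eqP /cards0_eq -> .
  by rewrite subset0 (negbTE Xne).
case: (classic (connected D1)) => Hc.
  by exists D1; split => //; exists X.
have [E1 [E2 HE]] : exists E1 E2 : setsys T,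
      [/\ wf_setsys E1, wf_setsys E2, [disjoint gset E1 & gset E2]
        & [/\ gset E1 != set0, gset E2 != set0 & D1 = dsum E1 E2]].
  by apply: NNPP.
have HE' : [/\ wf_setsys E2, wf_setsys E1, [disjoint gset E2 & gset E1]
        & [/\ gset E2 != set0, gset E1 != set0 & D1 = dsum E2 E1]].
  by case: HE => a b c [d e f]; split => //; [rewrite disjoint_sym | split => //; rewrite dsumC].
have [S1 ev1 lt1] := summand_piece D0 HS HE.
have [S2 ev2 lt2] := summand_piece D0 HS HE'.
case: HE => _ _ _ [_ _ ED1].
move: XD1; rewrite ED1 => /in_dsum [X1 [X2 [H1 H2 EX]]].
case: (boolP (X1 == set0)) => [/eqP X10|X1ne].
  apply: (IH E2) => //; first by rewrite -ltnS; apply: leq_trans lt2 le.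
    by apply: ev2.
  exists X2 => //; apply: contraNneq Xne => X20.
  by rewrite EX X10 X20 setU0.
apply: (IH E1) => //; first by rewrite -ltnS; apply: leq_trans lt1 le.
  by apply: ev1.
by exists X1.
Qed.


Lemma setsys_eta (D : setsys T) : D = SetSys (gset D) (sets D).
Proof. by case: D. Qed.

Lemma forward (D D1 : setsys T) s : full_lc_seq D s -> is_summand D1 D ->
  even_setsys D1 -> connected D1 -> gset D1 != set0 ->
  exists2 v, v \in gset D & D1 = SetSys [set v] [set set0].
Proof.
move=> [[us ss Hp] Hm] [D2 [W1 W2 Dj ED]] [b Hb] Hc Hne.
have D0 : set0 \in sets D.
  by have := Hp 0%N (leq0n _); rewrite take0 set_nil.
have [D10 D20] : set0 \in sets D1 /\ set0 \in sets D2 by apply: set0_dsum; rewrite -ED.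
have b0 : b = false by rewrite -(Hb _ D10) cards0.
have Hint : forall X, X \in sets D -> X :&: (gset D1) \in sets D1.
  move=> X; rewrite ED => /in_dsum [X1 [X2 [H1 H2 ->]]].
  suff -> : (X1 :|: X2) :&: (gset D1) = X1 by [].
  apply/setP => z; rewrite in_setI in_setU.
  case: (boolP (z \in X1)) => zX1 /=; first by rewrite (subsetP (W1 _ H1) z zX1).
  case: (boolP (z \in X2)) => zX2 //=.
  have zD2 := subsetP (W2 _ H2) z zX2.
  by apply/negbTE; apply/negP => zV; move/disjP': Dj => /(_ z zV); rewrite zD2.
have Hev : forall X, X \in sets D -> ~~ odd #|X :&: (gset D1)|.
  by move=> X XD; rewrite (Hb _ (Hint X XD)) b0.
have notin : forall x, x \in s -> x \notin (gset D1).
  move=> x xs; apply/negP => xV.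
  move: us Hp; case/splitPr: xs => s1 s2 us Hp.
  have i1 := Hp (size s1) ltac:(by rewrite size_cat leq_addr).
  have i2 := Hp (size s1).+1 ltac:(by rewrite size_cat /= addnS ltnS leq_addr).
  rewrite take_size_cat // in i1.
  rewrite take_cat (_ : ((size s1).+1 < size s1)%N = false) in i2; last first.
    by rewrite ltnNge leqnSn.
  rewrite subSnn /= take0 in i2.
  have xs1 : x \notin s1.
    by move: us; rewrite cat_uniq => /and3P [_ /hasPn H _]; apply: H; rewrite inE eqxx.
  have Eset : [set y in s1 ++ [:: x]] :&: (gset D1) = x |: ([set y in s1] :&: (gset D1)).
    apply/setP => z; rewrite !inE mem_cat !inE.
    by case: (eqVneq z x) => [->|_]; rewrite ?xV ?orbT ?andbT //= orbF.
  have H1 := Hev _ i1; have H2 := Hev _ i2.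
  rewrite Eset cardsU1 in_setI inE (negbTE xs1) /= in H2.
  by rewrite H1 in H2.
have Xin : [set y in s] \in sets D by have := Hp (size s) (leqnn _); rewrite take_size.
have XV : [set y in s] :&: (gset D1) = set0.
  apply/setP => z; rewrite !inE; case: (boolP (z \in s)) => //= zs.
  exact/negbTE/notin.
have S1 : sets D1 = [set set0].
  apply/setP => Y; rewrite in_set1; apply/idP/eqP => [YD1|->] //.
  move: (Xin); rewrite ED => /in_dsum [X1 [X2 [H1 H2 EX]]].
  have X1e : X1 = set0.
    apply/eqP; rewrite -subset0 -XV EX; apply/subsetP => z zX1.
    by rewrite in_setI in_setU zX1 (subsetP (W1 _ H1) z zX1).
  have YX : Y :|: X2 \in sets D by rewrite ED; apply/in_dsum; exists Y, X2.
  have sub : [set y in s] \subset Y :|: X2 by rewrite EX X1e set0U subsetUr.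
  have E := Hm _ YX sub.
  apply/eqP; rewrite -subset0 -XV; apply/subsetP => z zY.
  by rewrite in_setI -E in_setU zY (subsetP (W1 _ YD1) z zY).
have [v vV] := set0Pn _ Hne.
have gV : gset D1 = [set v].
  case: (boolP ((gset D1) :\ v == set0)) => [/eqP E|Hn2].
    by rewrite -(setD1K vV) E setU0.
  exfalso; apply: Hc.
  exists (SetSys [set v] [set set0]), (SetSys ((gset D1) :\ v) [set set0]); split => /=.
  - by move=> X; rewrite /= in_set1 => /eqP ->; apply: sub0set.
  - by move=> X; rewrite /= in_set1 => /eqP ->; apply: sub0set.
  - by apply/disjP' => x; rewrite in_set1 => /eqP ->; rewrite in_setD1 eqxx.
  - split => //; first by apply/set0Pn; exists v; exact: set11.
    rewrite [LHS]setsys_eta S1 /dsum /= setD1K // imset2_set1l imset_set1 setU0.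
    by [].
exists v; first by rewrite ED /= in_setU vV.
by rewrite [LHS]setsys_eta gV S1.
Qed.

Lemma wf_DH A W : wf_setsys (DH A W).
Proof. by move=> X /inDH []. Qed.

Lemma DH_even A Z : symm A -> (forall z, z \in Z -> ~~ A z z) -> even_setsys (DH A Z).
Proof.
move=> Hs Hl; exists false => X /inDH [XZ K]; apply/negbTE.
apply: (alt_even_n (leqnn _) Hs _ K) => z zX; apply: Hl; exact: (subsetP XZ).
Qed.

Lemma DH_split A V Z : symm A -> Z \subset V ->
  (forall z r, z \in Z -> r \in V -> r \notin Z -> ~~ A z r) ->
  DH A V = dsum (DH A Z) (DH A (V :\: Z)).
Proof.
move=> Hs ZV Zc.
have EV : Z :|: (V :\: Z) = V.
  apply/setP => z; rewrite !inE; case: (boolP (z \in Z)) => zZ //=.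
  by rewrite (subsetP ZV z zZ).
have cross X : X \subset V -> forall a b, a \in X :&: Z -> b \in X -> b \notin X :&: Z ->
    MF A a b = 0 /\ MF A b a = 0.
  move=> XV a b; rewrite in_setI => /andP [aX aZ] bX; rewrite in_setI bX /= => bZ.
  have := Zc a b aZ (subsetP XV b bX) bZ => /negbTE H.
  by rewrite /MF H (Hs b a) H.
have EI X1 X2 : X1 \subset Z -> X2 \subset V :\: Z -> (X1 :|: X2) :&: Z = X1.
  move=> H1 H2; apply/setP => z; rewrite in_setI in_setU.
  case: (boolP (z \in X1)) => zX1 /=; first by rewrite (subsetP H1 z zX1).
  case: (boolP (z \in X2)) => zX2 //=.
  by have := subsetP H2 z zX2; rewrite in_setD => /andP [/negbTE].
have ED X1 X2 : X1 \subset Z -> X2 \subset V :\: Z -> (X1 :|: X2) :\: ((X1 :|: X2) :&: Z) = X2.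
  move=> H1 H2; rewrite EI //; apply/setP => z; rewrite in_setD in_setU.
  case: (boolP (z \in X1)) => zX1 /=.
    have := subsetP H1 z zX1 => zZ.
    apply/esym/negbTE/negP => zX2.
    by have := subsetP H2 z zX2; rewrite in_setD zZ.
  by [].
rewrite /DH /dsum /= EV; congr SetSys; apply/setP => X.
change (X \in sets (DH A V) = (X \in sets (dsum (DH A Z) (DH A (V :\: Z))))).
apply/idP/idP.
- move=> /inDH [XV K]; apply/in_dsum; exists (X :&: Z), (X :\: Z).
  have [K1 K2] := (proj1 (split_ker (subsetIl X Z) (cross X XV))) K.
  have E2 : X :\: (X :&: Z) = X :\: Z.
    apply/setP => z; rewrite !inE; by case: (z \in X); case: (z \in Z).
  rewrite E2 in K2; split.
  + by apply/inDH; split => //; exact: subsetIr.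
  + by apply/inDH; split => //; exact: setSD.
  + by rewrite setID.
- move=> /in_dsum [X1 [X2 [/inDH [H1 K1] /inDH [H2 K2] ->]]].
  have XV : X1 :|: X2 \subset V.
    rewrite -EV; exact: setUSS.
  apply/inDH; split => //.
  apply/(split_ker (subsetIl _ Z) (cross _ XV)).
  by rewrite ED // EI.
Qed.

End Main.

Unset Implicit Arguments.

Theorem mainTheorem9 (T : finType) (D : setsys T) :
  binary_normal D ->
  ((exists s : seq T, full_lc_seq D s) <->
   (forall D1 : setsys T,
      is_summand D1 D -> even_setsys D1 -> connected D1 -> gset D1 != set0 ->
      exists2 v, v \in gset D & D1 = SetSys [set v] [set set0])).
Proof.
move=> [A [Hs ED]].
split.
  by move=> [s Hfs] D1 HS He Hc Hne; exact: forward Hfs HS He Hc Hne.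
move=> H.
set V := gset D in ED.
rewrite ED; apply: (thmP (leqnn #|V|)) => //.
apply/eqP/negPn/negP => /set0Pn [x /badsP [Z [/cllP [ZV Zl Zc] xZ [y yZ Axy]]]].
have HS : is_summand (DH A Z) D.
  exists (DH A (V :\: Z)); split; try exact: wf_DH.
    by apply/disjP' => z zZ /=; rewrite in_setD zZ.
  by rewrite {1}ED; exact: DH_split.
have Hev : even_setsys (DH A Z) by apply: DH_even.
have Hne : exists2 X, X \in sets (DH A Z) & X != set0.
  exists [set x; y].
    apply/inDH; split.
      by apply/subsetP => z; rewrite !inE => /orP [] /eqP ->.
    apply: pair_ker => //; try exact: Zl.
      by apply/eqP => E; move: (Zl x xZ); rewrite {2}E Axy.
    by rewrite Hs.
  by apply/set0Pn; exists x; rewrite !inE eqxx.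
have D0 : set0 \in sets D by rewrite ED; exact: set0_DH.
have [D1' [HS' He' Hc' [X XD XNe]]] := reduce D0 (leqnn _) HS Hev Hne.
have gne : gset D1' != set0.
  case: HS' => D2' [W1 _ _ _].
  have [z zX] := set0Pn _ XNe.
  by apply/set0Pn; exists z; apply: (subsetP (W1 _ XD)).
have [v _ ED1] := H D1' HS' He' Hc' gne.
by move: XD; rewrite ED1 /= in_set1 => /eqP XE; rewrite XE eqxx in XNe.
Qed.
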